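(* $\sqrt[3]{2}\notin\mathbb F_0$. Equivalently, given the points $(0,0)$ and $(0,1)$, one cannot construct by origami two points at distance $\sqrt[3]{2}$, so a cube with twice the volume of the unit cube cannot be constructed by origami.
   Context: An origami pair is a pair $(\mathcal P,\mathcal L)$ where $\mathcal P\subset\mathbb R^2$ is a set of points and $\mathcal L$ is a collection of lines in $\mathbb R^2$ such that: (i) the intersection point of any two non-parallel lines of $\mathcal L$ lies in $\mathcal P$; (ii) for any two distinct points of $\mathcal P$, the line through them is in $\mathcal L$; (iii) for any two distinct points of $\mathcal P$, the perpendicular bisector of the segment joining them is in $\mathcal L$; (iv) if $L_1,L_2\in\mathcal L$, then every line equidistant from $L_1$ and $L_2$ is in $\mathcal L$ (the midline if they are parallel, the angle bisectors if they intersect); (v) if $L_1,L_2\in\mathcal L$, then the mirror reflection of $L_2$ across $L_1$ is in $\mathcal L$. A set $\mathcal P\subset\mathbb R^2$ is closed under origami constructions if there is a collection of lines $\mathcal L$ with $(\mathcal P,\mathcal L)$ an origami pair. The set of origami constructible points is $\mathcal P_0=\bigcap\{\mathcal P : (0,0),(0,1)\in\mathcal P \text{ and } \mathcal P \text{ is closed under origami constructions}\}$. The set of origami numbers is $\mathbb F_0=\{\alpha\in\mathbb R : \exists v_1,v_2\in\mathcal P_0,\ |\alpha|=\operatorname{dist}(v_1,v_2)\}$. *)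

(* Defs.v *)
From Stdlib Require Import Reals.
Open Scope R_scope.

Definition point : Type := (R * R)%type.

Definition pset := point -> Prop.

Definition dist (p q : point) : R :=
  sqrt ((fst p - fst q) ^ 2 + (snd p - snd q) ^ 2).

Definition IsLine (ell : pset) : Prop :=
  exists a b c : R, (a <> 0 \/ b <> 0) /\
    forall x : point, ell x <-> a * fst x + b * snd x = c.

Definition in_coll (L : pset -> Prop) (S : pset) : Prop :=
  exists ell, L ell /\ forall x, ell x <-> S x.

(* the line through p and q (a line when p <> q) *)
Definition line_through (p q : point) : pset := fun x =>
  (fst q - fst p) * (snd x - snd p) - (snd q - snd p) * (fst x - fst p) = 0.

Definition perp_bisector (p q : point) : pset := fun x => dist x p = dist x q.

Definition pt_set_dist (x : point) (ell : pset) (d : R) : Prop :=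
  (exists y, ell y /\ dist x y = d) /\ (forall y, ell y -> d <= dist x y).

Definition equidistant (ell L1 L2 : pset) : Prop :=
  forall x, ell x -> exists d, pt_set_dist x L1 d /\ pt_set_dist x L2 d.

(* z is the mirror image of y across the line L (z = 2 f - y, f the foot of
   the perpendicular from y to L, i.e. the closest point of L to y) *)
Definition reflect_pt (L : pset) (y z : point) : Prop :=
  exists f, L f /\ (forall w, L w -> dist y f <= dist y w) /\
    z = (2 * fst f - fst y, 2 * snd f - snd y).

Definition reflect_line (L1 L2 : pset) : pset := fun z =>
  exists y, L2 y /\ reflect_pt L1 y z.

Definition origami_pair (P : pset) (L : pset -> Prop) : Prop :=
  (forall ell, L ell -> IsLine ell) /\
  (* (i) intersection point of two non-parallel lines lies in P;
     two lines of L sharing a point are non-parallel iff they are distinct *)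
  (forall L1 L2 x, L L1 -> L L2 -> (exists y, L1 y /\ ~ L2 y) ->
      L1 x -> L2 x -> P x) /\
  (forall p q, P p -> P q -> p <> q -> in_coll L (line_through p q)) /\
  (forall p q, P p -> P q -> p <> q -> in_coll L (perp_bisector p q)) /\
  (forall L1 L2 ell, L L1 -> L L2 -> (exists y, L1 y /\ ~ L2 y) ->
      IsLine ell -> equidistant ell L1 L2 -> in_coll L ell) /\
  (forall L1 L2, L L1 -> L L2 -> in_coll L (reflect_line L1 L2)).

Definition closed_under_origami (P : pset) : Prop :=
  exists L, origami_pair P L.

Definition P0 : pset := fun v =>
  forall P : pset, P (0, 0) -> P (0, 1) -> closed_under_origami P -> P v.

Definition origami_number (a : R) : Prop :=
  exists v1 v2, P0 v1 /\ P0 v2 /\ Rabs a = dist v1 v2.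

(* Main.v *)
From Pilot Require Import Defs.
From Stdlib Require Import Reals Lra Lia ZArith List Classical.
Open Scope R_scope.
Import Pilot.Defs.


Lemma cube_inj : forall x y : R, x*x*x = y*y*y -> x = y.
Proof.
  intros x y H.
  destruct (Req_dec x y) as [|Hne]; auto.
  assert (E : (x - y) * (x*x + x*y + y*y) = 0) by (rewrite <- (Rminus_diag_eq _ _ H); ring).
  apply Rmult_integral in E. destruct E as [E|E]. lra.
  assert (E2 : (2*x+y)*(2*x+y) + 3*(y*y) = 0) by (replace ((2*x+y)*(2*x+y) + 3*(y*y)) with (4*(x*x+x*y+y*y)) by ring; rewrite E; ring).
  assert (0 <= (2*x+y)*(2*x+y)) by apply Rle_0_sqr. assert (0 <= y*y) by apply Rle_0_sqr.
  assert (y*y = 0) by lra. assert (y = 0) by (apply Rmult_integral in H2; tauto). subst.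
  assert ((2*x)*(2*x) = 0) by lra. apply Rmult_integral in H3. lra.
Qed.

Lemma Z_cube2 : forall n : nat, forall a b : Z, (Z.abs b <= Z.of_nat n)%Z -> b <> 0%Z ->
  (a*a*a = 2*(b*b*b))%Z -> False.
Proof.
  induction n; intros a b Hb Hb0 H. lia.
  assert (Ea : Z.even a = true).
  { assert (Z.even (a*a*a) = true) by (rewrite H, Z.even_mul; reflexivity).
    rewrite !Z.even_mul in H0. destruct (Z.even a); auto. }
  apply Z.even_spec in Ea. destruct Ea as [a' Ha]. subst a.
  assert (H2 : (b*b*b = 4*(a'*a'*a'))%Z) by lia.
  assert (Eb : Z.even b = true).
  { assert (Z.even (b*b*b) = true) by (rewrite H2, Z.even_mul; reflexivity).
    rewrite !Z.even_mul in H0. destruct (Z.even b); auto. }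
  apply Z.even_spec in Eb. destruct Eb as [b' Hb']. subst b.
  apply (IHn a' b'); lia.
Qed.

Definition Qr (x : R) : Prop := exists p q : Z, q <> 0%Z /\ x = IZR p / IZR q.

Fixpoint InF (l : list R) (x : R) : Prop :=
  match l with
  | nil => Qr x
  | r :: l' => exists p q, InF l' p /\ InF l' q /\ x = p + q * sqrt r
  end.

Fixpoint valid (l : list R) : Prop :=
  match l with
  | nil => True
  | r :: l' => valid l' /\ InF l' r /\ 0 <= r
  end.

Lemma InF_0 : forall l, InF l 0.
Proof.
  induction l; simpl. exists 0%Z, 1%Z. split. lia. simpl. field.
  exists 0, 0. repeat split; auto. ring.
Qed.

Lemma InF_emb : forall r l x, InF l x -> InF (r :: l) x.
Proof. intros. simpl. exists x, 0. repeat split; auto using InF_0. ring. Qed.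

Lemma Qr_add : forall x y, Qr x -> Qr y -> Qr (x + y).
Proof.
  intros x y [p [q [Hq ->]]] [p' [q' [Hq' ->]]].
  exists (p*q' + p'*q)%Z, (q*q')%Z. split. lia.
  rewrite plus_IZR, !mult_IZR. field. split; apply not_0_IZR; auto.
Qed.
Lemma Qr_opp : forall x, Qr x -> Qr (- x).
Proof.
  intros x [p [q [Hq ->]]]. exists (-p)%Z, q. split; auto.
  rewrite opp_IZR. field. apply not_0_IZR; auto.
Qed.
Lemma Qr_mul : forall x y, Qr x -> Qr y -> Qr (x * y).
Proof.
  intros x y [p [q [Hq ->]]] [p' [q' [Hq' ->]]].
  exists (p*p')%Z, (q*q')%Z. split. lia.
  rewrite !mult_IZR. field. split; apply not_0_IZR; auto.
Qed.
Lemma Qr_inv : forall x, Qr x -> Qr (/ x).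
Proof.
  intros x [p [q [Hq ->]]].
  destruct (Z.eq_dec p 0) as [->|Hp].
  - exists 0%Z, 1%Z. split. lia. unfold Rdiv. rewrite Rmult_0_l, Rinv_0. simpl. field.
  - exists q, p. split; auto. field. split; apply not_0_IZR; auto.
Qed.
Lemma Qr_1 : Qr 1.
Proof. exists 1%Z, 1%Z. split. lia. simpl. field. Qed.

Record fieldlike (F : R -> Prop) : Prop := {
  f0 : F 0; f1 : F 1;
  fadd : forall x y, F x -> F y -> F (x + y);
  fopp : forall x, F x -> F (- x);
  fmul : forall x y, F x -> F y -> F (x * y);
  finv : forall x, F x -> F (/ x) }.

Lemma InF_field : forall l, valid l -> fieldlike (InF l).
Proof.
  induction l as [|r l IH]; intros Hv.
  - simpl. constructor; auto using Qr_add, Qr_opp, Qr_mul, Qr_inv, Qr_1.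
    exists 0%Z, 1%Z. split. lia. simpl. field.
  - destruct Hv as [Hv [Hr Hr0]]. specialize (IH Hv). destruct IH as [g0 g1 gadd gopp gmul ginv].
    set (s := sqrt r). assert (Hs : s * s = r) by (apply sqrt_sqrt; auto).
    constructor.
    + apply InF_0.
    + apply InF_emb; auto.
    + intros x y [p [q [Hp [Hq ->]]]] [p' [q' [Hp' [Hq' ->]]]].
      exists (p+p'), (q+q'). repeat split; auto. fold s. ring.
    + intros x [p [q [Hp [Hq ->]]]]. exists (-p), (-q). repeat split; auto. fold s. ring.
    + intros x y [p [q [Hp [Hq ->]]]] [p' [q' [Hp' [Hq' ->]]]].
      exists (p*p' + q*q'*r), (p*q' + q*p'). repeat split; auto.
      fold s. rewrite <- Hs. ring.
    + intros x [p [q [Hp [Hq ->]]]]. fold s.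
      destruct (Req_dec (p + q * s) 0) as [Hx|Hx].
      { rewrite Hx, Rinv_0. apply InF_0. }
      destruct (Req_dec (p*p - q*q*r) 0) as [HD|HD].
      * apply InF_emb. apply ginv.
        destruct (Req_dec q 0) as [->|Hq0].
        { replace (p + 0 * s) with p by ring. auto. }
        assert (E : (s - p/q) * (s + p/q) = 0).
        { replace ((s - p/q) * (s + p/q)) with ((s*s*q*q - p*p)/(q*q)) by (field; auto).
          rewrite Hs. replace (r*q*q - p*p) with (-(p*p - q*q*r)) by ring. rewrite HD.
          field; auto. }
        apply Rmult_integral in E. destruct E as [E|E].
        -- replace s with (p/q) by lra. replace (p + q*(p/q)) with (p+p) by (field; auto). auto.
        -- replace s with (-(p/q)) by lra. replace (p + q*(-(p/q))) with 0 by (field; auto). auto.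
      * assert (HD' : p*p - q*q*r = (p + q*s)*(p - q*s)) by (rewrite <- Hs; ring).
        assert (Hm : p - q*s <> 0).
        { intro E. apply HD. rewrite HD', E. ring. }
        exists (p * / (p*p - q*q*r)), (- q * / (p*p - q*q*r)). split; [|split].
        -- repeat first [assumption | apply gmul | apply ginv | apply gadd | apply gopp].
        -- repeat first [assumption | apply gmul | apply ginv | apply gadd | apply gopp].
        -- rewrite HD'. fold s. field. auto.
Qed.

Lemma Qr_IZR : forall z, Qr (IZR z).
Proof. intros z. exists z, 1%Z. split. lia. simpl. field. Qed.

Lemma Qr_InF : forall l x, Qr x -> InF l x.
Proof. induction l; intros; simpl; auto. apply InF_emb; auto. Qed.

Lemma InF_app : forall l1 l2, valid l1 -> valid l2 ->
  valid (l2 ++ l1) /\ (forall x, InF l2 x -> InF (l2 ++ l1) x) /\ (forall x, InF l1 x -> InF (l2 ++ l1) x).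
Proof.
  intros l1 l2 Hv1. induction l2 as [|r l2 IH]; intros Hv2.
  - simpl. split; auto. split; auto. intros; apply Qr_InF; auto.
  - destruct Hv2 as [Hv2 [Hr Hr0]]. destruct (IH Hv2) as [H1 [H2 H3]].
    split; [|split].
    + simpl. auto.
    + intros x [p [q [Hp [Hq ->]]]]. simpl. exists p, q. auto.
    + intros x Hx. simpl. apply InF_emb. apply H3; auto.
Qed.

Definition K (x : R) : Prop := exists l, valid l /\ InF l x.

Lemma K_bin : forall (op : R -> R -> R),
  (forall F, fieldlike F -> forall x y, F x -> F y -> F (op x y)) ->
  forall x y, K x -> K y -> K (op x y).
Proof.
  intros op Hop x y [l1 [Hv1 H1]] [l2 [Hv2 H2]].
  destruct (InF_app l1 l2 Hv1 Hv2) as [Hv [Hl2 Hl1]].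
  exists (l2 ++ l1). split; auto. apply Hop; auto. apply InF_field; auto.
Qed.

Lemma K_add : forall x y, K x -> K y -> K (x + y).
Proof. apply K_bin. intros F HF. apply fadd; auto. Qed.
Lemma K_mul : forall x y, K x -> K y -> K (x * y).
Proof. apply K_bin. intros F HF. apply fmul; auto. Qed.
Lemma K_opp : forall x, K x -> K (- x).
Proof. intros x [l [Hv H]]. exists l. split; auto. apply fopp; auto. apply InF_field; auto. Qed.
Lemma K_inv : forall x, K x -> K (/ x).
Proof. intros x [l [Hv H]]. exists l. split; auto. apply finv; auto. apply InF_field; auto. Qed.
Lemma K_0 : K 0.
Proof. exists nil. split. exact I. apply InF_0. Qed.
Lemma K_1 : K 1.
Proof. exists nil. split. exact I. apply Qr_1. Qed.
Lemma K_sub : forall x y, K x -> K y -> K (x - y).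
Proof. intros. unfold Rminus. apply K_add; auto. apply K_opp; auto. Qed.
Lemma K_div : forall x y, K x -> K y -> K (x / y).
Proof. intros. unfold Rdiv. apply K_mul; auto. apply K_inv; auto. Qed.
Lemma K_pow : forall x n, K x -> K (x ^ n).
Proof. intros x n Hx. induction n; simpl. apply K_1. apply K_mul; auto. Qed.
Lemma K_sqrt : forall x, K x -> 0 <= x -> K (sqrt x).
Proof.
  intros x [l [Hv H]] Hx. exists (x :: l). split. simpl; auto.
  simpl. exists 0, 1. split. apply InF_0. split. apply (f1 _ (InF_field l Hv)). ring.
Qed.

Lemma no_cube2 : forall l, valid l -> forall x, InF l x -> x * x * x <> 2.
Proof.
  induction l as [|r l IH]; intros Hv x Hx Hc.
  - destruct Hx as [p [q [Hq ->]]].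
    assert (IZR (p*p*p) = IZR (2*(q*q*q))).
    { rewrite !mult_IZR. assert (IZR q <> 0) by (apply not_0_IZR; auto).
      replace (IZR p) with ((IZR p / IZR q) * IZR q) by (field; auto).
      replace (IZR p / IZR q * IZR q * (IZR p / IZR q * IZR q) * (IZR p / IZR q * IZR q))
        with ((IZR p / IZR q * (IZR p / IZR q) * (IZR p / IZR q)) * (IZR q * IZR q * IZR q)) by ring.
      rewrite Hc. simpl. ring. }
    apply eq_IZR in H. apply (Z_cube2 (Z.abs_nat q) p q); auto. lia.
  - destruct Hv as [Hv [Hr Hr0]]. destruct (InF_field l Hv) as [g0 g1 gadd gopp gmul ginv].
    destruct Hx as [p [q [Hp [Hq ->]]]].
    set (s := sqrt r) in *. assert (Hs : s * s = r) by (apply sqrt_sqrt; auto).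
    destruct (classic (InF l s)) as [Hsin|Hsout].
    { apply (IH Hv (p + q*s)); auto. }
    set (A := p*p*p + 3*p*q*q*r). set (B := 3*p*p*q + q*q*q*r).
    assert (Ex : (p + q*s)*(p+q*s)*(p+q*s) = A + B*s) by (unfold A, B; rewrite <- Hs; ring).
    destruct (Req_dec B 0) as [HB|HB].
    + assert (Ey : (p - q*s)*(p-q*s)*(p-q*s) = A - B*s) by (unfold A, B; rewrite <- Hs; ring).
      assert (E : p - q*s = p + q*s).
      { apply cube_inj. rewrite Ey, Hc. rewrite Ex, HB in Hc. rewrite HB. lra. }
      assert (q*s = 0) by lra. apply (IH Hv p); auto. rewrite <- Hc. rewrite H. ring.
    + apply Hsout. replace s with ((2 - A) / B).
      * unfold Rdiv, Rminus, A, B. repeat first [assumption | apply gmul | apply ginv | apply gadd | apply gopp | apply Qr_InF, Qr_IZR].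
      * rewrite <- Hc, Ex. field. auto.
Qed.
Lemma K_IZR : forall z, K (IZR z).
Proof. intros z. exists nil. split. exact I. apply Qr_IZR. Qed.

Ltac kt := repeat first [ assumption | apply K_IZR | apply K_0 | apply K_1 | apply K_sub | apply K_div
  | apply K_add | apply K_mul | apply K_opp | apply K_inv | apply K_pow ].

Definition sd2 (p q : point) : R := (fst p - fst q) ^ 2 + (snd p - snd q) ^ 2.
Lemma d2_nonneg : forall p q : point, 0 <= sd2 p q.
Proof. intros. unfold sd2. pose proof (pow2_ge_0 (fst p - fst q)). pose proof (pow2_ge_0 (snd p - snd q)). lra. Qed.
Lemma dist_d2 : forall p q : point, dist p q = sqrt (sd2 p q).
Proof. reflexivity. Qed.
Lemma dist_le_iff : forall p q w : point, dist p q <= dist p w <-> sd2 p q <= sd2 p w.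
Proof.
  intros. rewrite !dist_d2. split; intro H.
  - apply sqrt_le_0; auto using d2_nonneg.
  - apply sqrt_le_1_alt; auto.
Qed.

Lemma sq_sum0 : forall u v : R, u ^ 2 + v ^ 2 <= 0 -> u = 0 /\ v = 0.
Proof.
  intros u v H. pose proof (pow2_ge_0 u). pose proof (pow2_ge_0 v).
  assert (Hu : u * u = 0) by (simpl in *; lra). assert (Hv : v * v = 0) by (simpl in *; lra).
  apply Rmult_integral in Hu. apply Rmult_integral in Hv. tauto.
Qed.

Definition tpar (a b c : R) (y : point) := (a * fst y + b * snd y - c) / (a*a + b*b).
Definition foot (a b c : R) (y : point) : point :=
  (fst y - tpar a b c y * a, snd y - tpar a b c y * b).

Lemma N_pos : forall a b : R, (a <> 0 \/ b <> 0) -> 0 < a*a + b*b.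
Proof. intros a b [H|H]; nra. Qed.

Lemma foot_on : forall a b c y, (a <> 0 \/ b <> 0) -> a * fst (foot a b c y) + b * snd (foot a b c y) = c.
Proof.
  intros a b c [y1 y2] Hab. pose proof (N_pos a b Hab). unfold foot, tpar; simpl. field. lra.
Qed.

Lemma pythag : forall a b c y w, (a <> 0 \/ b <> 0) -> a * fst w + b * snd w = c ->
  sd2 y w = sd2 y (foot a b c y) + sd2 (foot a b c y) w.
Proof.
  intros a b c [y1 y2] [w1 w2] Hab Hw. pose proof (N_pos a b Hab). simpl in Hw.
  unfold sd2, foot, tpar; simpl. subst c. field. lra.
Qed.

Lemma foot_d2 : forall a b c y, (a <> 0 \/ b <> 0) ->
  sd2 y (foot a b c y) = (a * fst y + b * snd y - c)^2 / (a*a+b*b).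
Proof.
  intros a b c [y1 y2] Hab. pose proof (N_pos a b Hab). unfold sd2, foot, tpar; simpl. field. lra.
Qed.

Section Line.
Variables (a b c : R) (ell : pset).
Hypothesis Hab : a <> 0 \/ b <> 0.
Hypothesis Hell : forall x, ell x <-> a * fst x + b * snd x = c.

Lemma minimizer_iff : forall y f, ell f ->
  ((forall w, ell w -> dist y f <= dist y w) <-> f = foot a b c y).
Proof.
  intros y f Hf. split.
  - intros Hmin. assert (Hfo : ell (foot a b c y)) by (apply Hell; apply foot_on; auto).
    specialize (Hmin _ Hfo). apply dist_le_iff in Hmin.
    apply Hell in Hf. rewrite (pythag a b c y f Hab Hf) in Hmin.
    assert (Z : sd2 (foot a b c y) f <= 0) by lra.
    destruct f as [f1 f2]. destruct (foot a b c y) as [g1 g2]. unfold sd2 in Z; simpl in Z.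
    apply sq_sum0 in Z. f_equal; lra.
  - intros -> w Hw. apply dist_le_iff. apply Hell in Hw. rewrite (pythag a b c y w Hab Hw).
    pose proof (d2_nonneg (foot a b c y) w). lra.
Qed.

Lemma psd_val : forall x d, pt_set_dist x ell d -> d * d = (a * fst x + b * snd x - c)^2 / (a*a+b*b).
Proof.
  intros x d [[y [Hy Hd]] Hmin].
  assert (Hfo : ell (foot a b c x)) by (apply Hell; apply foot_on; auto).
  pose proof (Hmin _ Hfo).
  assert (dist x (foot a b c x) <= dist x y).
  { apply dist_le_iff. apply Hell in Hy. rewrite (pythag a b c x y Hab Hy).
    pose proof (d2_nonneg (foot a b c x) y). lra. }
  assert (Hdd : d = dist x (foot a b c x)) by lra. rewrite Hdd.
  rewrite <- foot_d2 by auto. rewrite dist_d2. apply sqrt_sqrt. apply d2_nonneg.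
Qed.

Definition refl (y : point) : point :=
  (2 * fst (foot a b c y) - fst y, 2 * snd (foot a b c y) - snd y).

Lemma reflect_pt_iff : forall y z, reflect_pt ell y z <-> z = refl y.
Proof.
  intros y z. split.
  - intros [f [Hf [Hmin ->]]]. apply (minimizer_iff y f Hf) in Hmin. subst f. reflexivity.
  - intros ->. exists (foot a b c y). assert (Hfo : ell (foot a b c y)) by (apply Hell; apply foot_on; auto).
    split; auto. split; auto. apply minimizer_iff; auto.
Qed.

Lemma refl_invol : forall y, refl (refl y) = y.
Proof.
  intros [y1 y2]. pose proof (N_pos a b Hab). unfold refl, foot, tpar; simpl. f_equal; field; lra.
Qed.
End Line.

Definition Pk (v : point) : Prop := K (fst v) /\ K (snd v).
Definition Lk (ell : pset) : Prop := exists a b c, K a /\ K b /\ K c /\ (a <> 0 \/ b <> 0) /\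
  forall x, ell x <-> a * fst x + b * snd x = c.

Lemma Lk_IsLine : forall ell, Lk ell -> IsLine ell.
Proof. intros ell [a [b [c [_ [_ [_ [H1 H2]]]]]]]. exists a, b, c. auto. Qed.

Lemma par : forall a1 b1 a2 b2 u1 u2, a1*b2 = a2*b1 -> (a1 <> 0 \/ b1 <> 0) ->
  a1*u1 + b1*u2 = 0 -> a2*u1 + b2*u2 = 0.
Proof.
  intros a1 b1 a2 b2 u1 u2 Hd Hn Hu.
  assert (E1 : a1*(a2*u1+b2*u2) = a2*(a1*u1+b1*u2) + u2*(a1*b2 - a2*b1)) by ring.
  assert (E2 : b1*(a2*u1+b2*u2) = b2*(a1*u1+b1*u2) + u1*(a2*b1 - a1*b2)) by ring.
  rewrite Hu, Hd in E1, E2. replace (a2*b1 - a2*b1) with 0 in E1, E2 by ring.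
  destruct Hn as [Hn|Hn].
  - apply (Rmult_eq_reg_l a1); auto. rewrite E1. ring.
  - apply (Rmult_eq_reg_l b1); auto. rewrite E2. ring.
Qed.

Lemma pt_neq : forall p q : point, p <> q -> fst p - fst q <> 0 \/ snd p - snd q <> 0.
Proof.
  intros [p1 p2] [q1 q2] H; simpl. destruct (Req_dec p1 q1); destruct (Req_dec p2 q2); subst; try lra.
  exfalso; auto.
Qed.

Lemma same_line : forall a b c A B C (p q : point),
  (a <> 0 \/ b <> 0) -> (A <> 0 \/ B <> 0) -> p <> q ->
  a * fst p + b * snd p = c -> a * fst q + b * snd q = c ->
  A * fst p + B * snd p = C -> A * fst q + B * snd q = C ->
  forall z : point, (a * fst z + b * snd z = c <-> A * fst z + B * snd z = C).
Proof.
  intros a b c A B C p q Hab HAB Hpq H1 H2 H3 H4 z.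
  set (u1 := fst q - fst p). set (u2 := snd q - snd p).
  assert (Hu : u1 <> 0 \/ u2 <> 0) by (destruct (pt_neq q p); auto).
  assert (e1 : a*u1 + b*u2 = 0) by (unfold u1, u2; lra).
  assert (e2 : A*u1 + B*u2 = 0) by (unfold u1, u2; lra).
  assert (Hdet : a*B = A*b).
  { assert (E1 : (a*B - A*b)*u1 = B*(a*u1+b*u2) - b*(A*u1+B*u2)) by ring.
    assert (E2 : (a*B - A*b)*u2 = a*(A*u1+B*u2) - A*(a*u1+b*u2)) by ring.
    rewrite e1, e2 in E1, E2. destruct Hu as [Hu|Hu].
    - assert (a*B - A*b = 0). { apply (Rmult_eq_reg_r u1); auto. rewrite E1. ring. } lra.
    - assert (a*B - A*b = 0). { apply (Rmult_eq_reg_r u2); auto. rewrite E2. ring. } lra. }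
  split; intro Hz.
  - assert (A*(fst z - fst p) + B*(snd z - snd p) = 0).
    { apply (par a b); auto; lra. }
    lra.
  - assert (a*(fst z - fst p) + b*(snd z - snd p) = 0).
    { apply (par A B); auto; lra. }
    lra.
Qed.

Lemma cond_i : forall L1 L2 x, Lk L1 -> Lk L2 -> (exists y, L1 y /\ ~ L2 y) -> L1 x -> L2 x -> Pk x.
Proof.
  intros L1 L2 x [a1 [b1 [c1 [Ka1 [Kb1 [Kc1 [Hn1 H1]]]]]]] [a2 [b2 [c2 [Ka2 [Kb2 [Kc2 [Hn2 H2]]]]]]]
    [y [Hy1 Hy2]] Hx1 Hx2.
  apply H1 in Hx1, Hy1. apply H2 in Hx2. rewrite H2 in Hy2.
  destruct (Req_dec (a1*b2 - a2*b1) 0) as [Hd|Hd].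
  - exfalso. apply Hy2.
    assert (a2*(fst y - fst x) + b2*(snd y - snd x) = 0).
    { apply (par a1 b1); auto; lra. }
    lra.
  - destruct x as [x1 x2]. simpl in *. split; simpl.
    + replace x1 with ((c1*b2 - c2*b1)/(a1*b2 - a2*b1)).
      * kt.
      * rewrite <- Hx1, <- Hx2. field; auto.
    + replace x2 with ((a1*c2 - a2*c1)/(a1*b2 - a2*b1)).
      * kt.
      * rewrite <- Hx1, <- Hx2. field; auto.
Qed.

Lemma cond_ii : forall p q, Pk p -> Pk q -> p <> q -> in_coll Lk (line_through p q).
Proof.
  intros [p1 p2] [q1 q2] [Kp1 Kp2] [Kq1 Kq2] Hpq. simpl in *.
  destruct (pt_neq _ _ Hpq) as [H|H]; simpl in H;
  exists (fun x => (-(q2-p2)) * fst x + (q1-p1) * snd x = (q1-p1)*p2 - (q2-p2)*p1);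
  (split; [exists (-(q2-p2)), (q1-p1), ((q1-p1)*p2 - (q2-p2)*p1); repeat split; try kt;
     try (intros; tauto); lra |]);
  intros [x1 x2]; unfold line_through; simpl; split; intro; lra.
Qed.

Lemma cond_iii : forall p q, Pk p -> Pk q -> p <> q -> in_coll Lk (perp_bisector p q).
Proof.
  intros [p1 p2] [q1 q2] [Kp1 Kp2] [Kq1 Kq2] Hpq. simpl in *.
  destruct (pt_neq _ _ Hpq) as [H|H]; simpl in H;
  exists (fun x => (2*(q1-p1)) * fst x + (2*(q2-p2)) * snd x = (q1*q1+q2*q2) - (p1*p1+p2*p2));
  (split; [exists (2*(q1-p1)), (2*(q2-p2)), ((q1*q1+q2*q2) - (p1*p1+p2*p2)); repeat split; try kt;
     try (intros; tauto); lra |]);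
  intros [x1 x2]; unfold perp_bisector; rewrite !dist_d2; unfold sd2; simpl;
  (assert (Hid: (x1-p1)^2 + (x2-p2)^2 - ((x1-q1)^2 + (x2-q2)^2) = 2*(q1-p1)*x1 + 2*(q2-p2)*x2 - ((q1*q1+q2*q2)-(p1*p1+p2*p2))) by ring);
  pose proof (pow2_ge_0 (x1-p1)); pose proof (pow2_ge_0 (x2-p2));
  pose proof (pow2_ge_0 (x1-q1)); pose proof (pow2_ge_0 (x2-q2));
  (split; intro E; [apply f_equal; lra | apply sqrt_inj in E; lra]).
Qed.

Lemma cond_v : forall L1 L2, Lk L1 -> Lk L2 -> in_coll Lk (reflect_line L1 L2).
Proof.
  intros L1 L2 [a [b [c [Ka [Kb [Kc [Hn H1]]]]]]] [a2 [b2 [c2 [Ka2 [Kb2 [Kc2 [Hn2 H2]]]]]]].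
  pose proof (N_pos a b Hn) as HN.
  set (k := (a*a2 + b*b2)/(a*a+b*b)).
  assert (Kk : K k) by (unfold k; kt).
  assert (HkN : k * (a*a+b*b) = a*a2 + b*b2) by (unfold k; field; lra).
  exists (fun z => (a2 - 2*k*a) * fst z + (b2 - 2*k*b) * snd z = c2 - 2*k*c).
  split.
  - exists (a2 - 2*k*a), (b2 - 2*k*b), (c2 - 2*k*c). repeat split; try kt.
    + destruct (Req_dec (a2 - 2*k*a) 0) as [E1|E1]; destruct (Req_dec (b2 - 2*k*b) 0) as [E2|E2]; auto.
      exfalso. assert (k * (a*a+b*b) = 0) by nra.
      assert (k = 0). { apply Rmult_integral in H. lra. }
      subst k. rewrite H0 in E1, E2. destruct Hn2; lra.
    + auto.
    + auto.
  - assert (Id : forall z, (a2 - 2*k*a) * fst z + (b2 - 2*k*b) * snd z - (c2 - 2*k*c)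
                 = a2 * fst (refl a b c z) + b2 * snd (refl a b c z) - c2).
    { intros [z1 z2]. unfold refl, foot, tpar; simpl. unfold k. field. lra. }
    intros z. split.
    + intros Hz. unfold reflect_line. exists (refl a b c z). split.
      * apply H2. pose proof (Id z). lra.
      * apply (reflect_pt_iff a b c L1 Hn H1). symmetry. apply refl_invol; auto.
    + intros [y [Hy Hr]]. apply (reflect_pt_iff a b c L1 Hn H1) in Hr. subst z.
      apply H2 in Hy. pose proof (Id (refl a b c y)). rewrite refl_invol in H; auto. lra.
Qed.

Lemma cond_iv_eps : forall a1 b1 c1 a2 b2 c2 n1 n2 e a b c (ell L1 L2 : pset) (p1 p2 : point),
  K a1 -> K b1 -> K c1 -> K a2 -> K b2 -> K c2 -> K n1 -> K n2 -> K e ->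
  n1 <> 0 -> n2 <> 0 -> e <> 0 ->
  (forall x, L1 x <-> a1 * fst x + b1 * snd x = c1) ->
  (forall x, L2 x <-> a2 * fst x + b2 * snd x = c2) ->
  (exists y, L1 y /\ ~ L2 y) ->
  (a <> 0 \/ b <> 0) -> (forall x, ell x <-> a * fst x + b * snd x = c) ->
  p1 <> p2 -> ell p1 -> ell p2 ->
  (a1/n1 - e*a2/n2) * fst p1 + (b1/n1 - e*b2/n2) * snd p1 = (c1/n1 - e*c2/n2) ->
  (a1/n1 - e*a2/n2) * fst p2 + (b1/n1 - e*b2/n2) * snd p2 = (c1/n1 - e*c2/n2) ->
  in_coll Lk ell.
Proof.
  intros a1 b1 c1 a2 b2 c2 n1 n2 e a b c ell L1 L2 p1 p2 Ka1 Kb1 Kc1 Ka2 Kb2 Kc2 Kn1 Kn2 Ke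
    Hn1 Hn2 He H1 H2 [y [Hy1 Hy2]] Hab Hell Hp Hp1 Hp2 G1 G2.
  set (A := a1/n1 - e*a2/n2) in *. set (B := b1/n1 - e*b2/n2) in *. set (C := c1/n1 - e*c2/n2) in *.
  assert (HAB : A <> 0 \/ B <> 0).
  { destruct (Req_dec A 0) as [EA|EA]; destruct (Req_dec B 0) as [EB|EB]; auto.
    exfalso. rewrite EA, EB in G1. assert (EC : C = 0) by lra.
    apply Hy2. apply H2. apply H1 in Hy1.
    assert (Id : A * fst y + B * snd y - C = (a1 * fst y + b1 * snd y - c1)/n1 - e*(a2 * fst y + b2 * snd y - c2)/n2)
      by (unfold A, B, C; field; auto).
    rewrite EA, EB, EC, Hy1 in Id. replace (c1 - c1) with 0 in Id by ring.
    assert (Z : e * (a2 * fst y + b2 * snd y - c2) / n2 = 0).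
    { replace (0/n1) with 0 in Id by (field; auto). lra. }
    unfold Rdiv in Z. apply Rmult_integral in Z. destruct Z as [Z|Z].
    - apply Rmult_integral in Z. destruct Z as [Z|Z]. contradiction. lra.
    - exfalso. apply Rinv_neq_0_compat in Hn2. contradiction. }
  exists (fun z => A * fst z + B * snd z = C). split.
  - exists A, B, C. repeat split; try (unfold A, B, C; kt); auto.
  - intros z. rewrite Hell. apply Hell in Hp1. apply Hell in Hp2.
    symmetry. apply (same_line a b c A B C p1 p2); auto.
Qed.

Lemma cond_iv : forall L1 L2 ell, Lk L1 -> Lk L2 -> (exists y, L1 y /\ ~ L2 y) ->
  IsLine ell -> equidistant ell L1 L2 -> in_coll Lk ell.
Proof.
  intros L1 L2 ell [a1 [b1 [c1 [Ka1 [Kb1 [Kc1 [Hn1 H1]]]]]]] [a2 [b2 [c2 [Ka2 [Kb2 [Kc2 [Hn2 H2]]]]]]]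
    Hy [a [b [c [Hab Hell]]]] Heq.
  pose proof (N_pos a1 b1 Hn1) as HN1. pose proof (N_pos a2 b2 Hn2) as HN2. pose proof (N_pos a b Hab) as HN.
  set (N1 := a1*a1+b1*b1) in *. set (N2 := a2*a2+b2*b2) in *.
  set (n1 := sqrt N1). set (n2 := sqrt N2).
  assert (Hs1 : n1 * n1 = N1) by (apply sqrt_sqrt; lra).
  assert (Hs2 : n2 * n2 = N2) by (apply sqrt_sqrt; lra).
  assert (Hp1 : 0 < n1) by (apply sqrt_lt_R0; lra).
  assert (Hp2 : 0 < n2) by (apply sqrt_lt_R0; lra).
  assert (Kn1 : K n1) by (apply K_sqrt; [unfold N1; kt | lra]).
  assert (Kn2 : K n2) by (apply K_sqrt; [unfold N2; kt | lra]).
  set (G := fun (e : R) (z : point) => (a1/n1 - e*a2/n2) * fst z + (b1/n1 - e*b2/n2) * snd z - (c1/n1 - e*c2/n2)).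
  assert (Hprod : forall z, ell z -> G 1 z * G (-1) z = 0).
  { intros z Hz. destruct (Heq z Hz) as [d [D1 D2]].
    apply (psd_val a1 b1 c1 L1 Hn1 H1) in D1. apply (psd_val a2 b2 c2 L2 Hn2 H2) in D2.
    fold N1 in D1. fold N2 in D2. rewrite D1 in D2.
    unfold G. rewrite <- Hs1, <- Hs2 in D2.
    set (u := a1 * fst z + b1 * snd z - c1) in *. set (v := a2 * fst z + b2 * snd z - c2) in *.
    replace ((a1 / n1 - 1 * a2 / n2) * fst z + (b1 / n1 - 1 * b2 / n2) * snd z - (c1 / n1 - 1 * c2 / n2))
      with (u/n1 - v/n2) by (unfold u, v; field; lra).
    replace ((a1 / n1 - -1 * a2 / n2) * fst z + (b1 / n1 - -1 * b2 / n2) * snd z - (c1 / n1 - -1 * c2 / n2))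
      with (u/n1 + v/n2) by (unfold u, v; field; lra).
    replace ((u / n1 - v / n2) * (u / n1 + v / n2)) with (u^2/(n1*n1) - v^2/(n2*n2)) by (field; lra).
    lra. }
  set (p0 := (c*a/(a*a+b*b), c*b/(a*a+b*b))).
  set (q1 := (fst p0 - b, snd p0 + a)). set (q2 := (fst p0 + b, snd p0 - a)).
  assert (E0 : ell p0) by (apply Hell; unfold p0; simpl; field; lra).
  assert (E1 : ell q1) by (apply Hell; unfold q1, p0; simpl; field; lra).
  assert (E2 : ell q2) by (apply Hell; unfold q2, p0; simpl; field; lra).
  assert (Hq : q1 <> q2).
  { intro E. unfold q1, q2 in E. injection E. intros. destruct Hab; lra. }
  assert (Aff : forall e, G e q1 + G e q2 = 2 * G e p0) by (intros; unfold G, q1, q2; simpl; ring).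
  assert (Hcase : (G 1 q1 = 0 /\ G 1 q2 = 0) \/ (G (-1) q1 = 0 /\ G (-1) q2 = 0)).
  { pose proof (Hprod p0 E0) as P0. pose proof (Hprod q1 E1) as P1. pose proof (Hprod q2 E2) as P2.
    pose proof (Aff 1) as A1. pose proof (Aff (-1)) as A2.
    set (v0 := G 1 p0) in *. set (v1 := G 1 q1) in *. set (v2 := G 1 q2) in *.
    set (w0 := G (-1) p0) in *. set (w1 := G (-1) q1) in *. set (w2 := G (-1) q2) in *.
    apply Rmult_integral in P0. apply Rmult_integral in P1. apply Rmult_integral in P2.
    destruct P0 as [P0|P0]; destruct P1 as [P1|P1]; destruct P2 as [P2|P2]; try (left; split; lra);
      try (right; split; lra). }
  destruct Hcase as [[C1 C2]|[C1 C2]].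
  - apply (cond_iv_eps a1 b1 c1 a2 b2 c2 n1 n2 1 a b c ell L1 L2 q1 q2); auto; try kt; try lra;
      unfold G in C1, C2; lra.
  - apply (cond_iv_eps a1 b1 c1 a2 b2 c2 n1 n2 (-1) a b c ell L1 L2 q1 q2); auto; try kt; try lra;
      unfold G in C1, C2; lra.
Qed.

Lemma Pk_closed : closed_under_origami Pk.
Proof.
  exists Lk. split; [exact Lk_IsLine|]. split; [exact cond_i|]. split; [exact cond_ii|].
  split; [exact cond_iii|]. split; [exact cond_iv|]. exact cond_v.
Qed.

Theorem mainTheorem8 : forall a : R, a ^ 3 = 2 -> ~ origami_number a.
Proof.
  intros a Ha [v1 [v2 [H1 [H2 Hd]]]].
  assert (P1 : Pk v1) by (apply H1; [split; simpl; kt | split; simpl; kt | exact Pk_closed]).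
  assert (P2 : Pk v2) by (apply H2; [split; simpl; kt | split; simpl; kt | exact Pk_closed]).
  assert (Kd : K (dist v1 v2)).
  { rewrite dist_d2. apply K_sqrt. destruct P1, P2. unfold sd2. kt. apply d2_nonneg. }
  assert (Hpos : 0 < a).
  { destruct (Rle_lt_dec a 0); auto. simpl in Ha. exfalso.
    assert (0 <= a*a) by nra. nra. }
  rewrite Rabs_right in Hd by lra. rewrite <- Hd in Kd.
  destruct Kd as [l [Hv Hl]]. apply (no_cube2 l Hv a Hl). simpl in Ha. lra.
Qed.
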